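(* Consider two bits $B_1,B_2$ and two anti-bits $A_1,A_2$ in the state $\Phi_{B_1A_1}\otimes\Phi_{B_2A_2}$, where $\Phi=|\Phi\rangle\langle\Phi|$ and $|\Phi\rangle=(|0\rangle|0\rangle+|1\rangle|1\rangle)/\sqrt2$. For $i,j\in\{0,1\}$ and a bit $B$ and anti-bit $A$ let $|\phi_i^{(j)}\rangle_{BA}=|i\rangle_B|i\oplus j\rangle_A$ ($\oplus$ = addition mod 2). Let $\{|v_0\rangle,|v_1\rangle\}$ and $\{|w_0\rangle,|w_1\rangle\}$ be any two orthonormal bases of $\mathbb C^2$, with $|v_a\rangle=v_{a,0}|0\rangle+v_{a,1}|1\rangle$ and $|w_b\rangle=w_{b,0}|0\rangle+w_{b,1}|1\rangle$. Define, for $a,b,l\in\{0,1\}$, $|V_a^{(l)}\rangle=v_{a,0}|\phi_0^{(l)}\rangle_{B_1A_2}+v_{a,1}|\phi_1^{(l)}\rangle_{B_1A_2}$, $|W_b^{(l)}\rangle=w_{b,0}|\phi_l^{(l)}\rangle_{B_2A_1}+w_{b,1}|\phi_{l\oplus1}^{(l)}\rangle_{B_2A_1}$, $P_a=\sum_{l}|V_a^{(l)}\rangle\langle V_a^{(l)}|$ and $Q_b=\sum_l|W_b^{(l)}\rangle\langle W_b^{(l)}|$. Then $\{P_0,P_1\}$ is a valid measurement on the $(1,1)$-composite $B_1A_2$, $\{Q_0,Q_1\}$ is a valid measurement on the $(1,1)$-composite $B_2A_1$, and for all $a,b\in\{0,1\}$ $$\mathrm{Tr}\big[(P_a\otimes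 Q_b)(\Phi_{B_1A_1}\otimes\Phi_{B_2A_2})\big]=\tfrac12\,\big|v_{a,0}w_{b,0}+v_{a,1}w_{b,1}\big|^2,$$ which equals the probability of outcomes $(a,b)$ when the qubit measurements in bases $\{|v_a\rangle\}$ and $\{|w_b\rangle\}$ are performed on the two-qubit maximally entangled state $(|00\rangle+|11\rangle)/\sqrt2$. Consequently, with Alice holding $B_1A_2$ and Bob holding $B_2A_1$, local valid measurements on this state achieve the CHSH value $2\sqrt2$, violating the CHSH inequality.
   Context: Take $d=2$: bits and anti-bits each have Hilbert space $\mathbb C^2$ with computational basis $\{|0\rangle,|1\rangle\}$. For a bit $B$ and anti-bit $A$, the pure states of the $(1,1)$-composite $BA$ are unit vectors lying in the parity-0 subspace $\mathrm{span}\{|0\rangle|0\rangle,|1\rangle|1\rangle\}$ or in the parity-1 subspace $\mathrm{span}\{|0\rangle|1\rangle,|1\rangle|0\rangle\}$. For two bits and two anti-bits, pure states are unit vectors of the form $(U\otimes W)|\Psi'\rangle$ with $U$ a permutation of the bit factors, $W$ a permutation of the anti-bit factors and $|\Psi'\rangle$ having well-defined parity on each pair $(B_1A_1)$ and $(B_2A_2)$; states are convex combinations of projectors onto pure states. A valid measurement on a composite is a POVM whose elements are nonnegative linear combinations of projectors onto pure states of that composite; outcome probabilities are given by $\mathrm{Tr}[P\rho]$. The CHSH value is $\langle A_0B_0\rangle+\langle A_0B_1\rangle+\langle A_1B_0\rangle-\langle A_1B_1\rangle$ for two-outcome ($\pm1$) measurements $A_0,A_1$ of Alice and $B_0,B_1$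 of Bob; the CHSH inequality states that local hidden variable models give at most $2$. *)

(* Defs.v *)
From mathcomp Require Import all_boot all_order all_algebra all_field.
Set Implicit Arguments. Unset Strict Implicit. Unset Printing Implicit Defensive.
Import Order.TTheory GRing.Theory Num.Theory.
Local Open Scope ring_scope.

(* Bits are booleans; computational basis |false> = |0>, |true> = |1>.
   Addition mod 2 is xor, written (+) / addb. *)

Definition vect (T : finType) := T -> algC.
Definition oper (T : finType) := T -> T -> algC.

Definition proj (T : finType) (psi : vect T) : oper T :=
  fun x y => psi x * (psi y)^*.
Definition idop (T : finType) : oper T := fun x y => if x == y then 1 else 0.
Definition trprod (T : finType) (M rho : oper T) : algC :=
  \sum_(x : T) \sum_(y : T) M x y * rho y x.
Definition addop (T : finType) (M N : oper T) : oper T := fun x y => M x y + N x y.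

(* (1,1)-composite of a bit B and an anti-bit A: basis indexed by (b, a). *)
Definition BA := (bool * bool)%type.

(* Pure states of BA: unit vectors of well-defined parity b (+) a. *)
Definition pure11 (psi : vect BA) : Prop :=
  \sum_(x : BA) `|psi x| ^+ 2 = 1 /\
  exists p : bool, forall x : BA, psi x != 0 -> x.1 (+) x.2 = p.

Definition valid_effect11 (P : oper BA) : Prop :=
  exists (n : nat) (c : 'I_n -> algC) (psi : 'I_n -> vect BA),
    (forall i, 0 <= c i) /\ (forall i, pure11 (psi i)) /\
    forall x y, P x y = \sum_(i < n) c i * proj (psi i) x y.

Definition valid_meas11 (P : bool -> oper BA) : Prop :=
  (forall a, valid_effect11 (P a)) /\
  forall x y, P false x y + P true x y = idop x y.

Definition Phi2 : vect (bool * bool)%type :=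
  fun x => if x.1 == x.2 then (sqrtC 2)^-1 else 0.

(* Four systems: index ((b1, a1), (b2, a2)). *)
Definition Sys4 := ((bool * bool) * (bool * bool))%type.

Definition rho4 : oper Sys4 :=
  fun x y => proj Phi2 x.1 y.1 * proj Phi2 x.2 y.2.

(* P acting on (B1,A2) tensored with Q acting on (B2,A1) *)
Definition tens_B1A2_B2A1 (P Q : oper BA) : oper Sys4 :=
  fun x y => P (x.1.1, x.2.2) (y.1.1, y.2.2) * Q (x.2.1, x.1.2) (y.2.1, y.1.2).

Definition phi_ij (i j : bool) : vect BA :=
  fun x => if (x.1 == i) && (x.2 == i (+) j) then 1 else 0.

(* Orthonormal basis of C^2: v a k = v_{a,k}. *)
Definition onb2 (v : bool -> bool -> algC) : Prop :=
  forall a a', \sum_(k : bool) v a k * (v a' k)^* = if a == a' then 1 else 0.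

Definition Vvec (v : bool -> bool -> algC) (a l : bool) : vect BA :=
  fun x => v a false * phi_ij false l x + v a true * phi_ij true l x.
Definition Wvec (w : bool -> bool -> algC) (b l : bool) : vect BA :=
  fun x => w b false * phi_ij l l x + w b true * phi_ij (~~ l) l x.

Definition Pop (v : bool -> bool -> algC) (a : bool) : oper BA :=
  addop (proj (Vvec v a false)) (proj (Vvec v a true)).
Definition Qop (w : bool -> bool -> algC) (b : bool) : oper BA :=
  addop (proj (Wvec w b false)) (proj (Wvec w b true)).

Definition prob4 (v w : bool -> bool -> algC) (a b : bool) : algC :=
  trprod (tens_B1A2_B2A1 (Pop v a) (Qop w b)) rho4.

Definition vec2 (v : bool -> bool -> algC) (a : bool) : vect bool := v a.
Definition prob_qubit (v w : bool -> bool -> algC) (a b : bool) : algC :=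
  trprod (fun x y : bool * bool => proj (vec2 v a) x.1 y.1 * proj (vec2 w b) x.2 y.2)
         (proj Phi2).

(* Correlator <A B> for +-1 valued outcomes (outcome a <-> (-1)^a). *)
Definition correlator (p : bool -> bool -> algC) : algC :=
  \sum_(a : bool) \sum_(b : bool) (if a == b then 1 else -1) * p a b.

Definition CHSH (E00 E01 E10 E11 : algC) : algC := E00 + E01 + E10 - E11.

(* Main.v *)
Require Import Defs.
From mathcomp Require Import all_boot all_order all_algebra all_field.
From mathcomp Require Import ring lra.
Import Order.TTheory GRing.Theory Num.Theory.
Local Open Scope ring_scope.

Lemma sumBA (F : BA -> algC) :
  \sum_(x : BA) F x = F (true,true) + F (true,false) + (F (false,true) + F (false,false)).
Proof.
transitivity (\sum_(p : BA) F (p.1, p.2)); first by apply: eq_bigr => -[].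
by rewrite -(pair_bigA _ (fun a b => F (a, b))) /= !big_bool.
Qed.

Lemma sumS4 (F : Sys4 -> algC) :
  \sum_(x : Sys4) F x = \sum_(p : BA) \sum_(q : BA) F (p, q).
Proof.
transitivity (\sum_(p : Sys4) F (p.1, p.2)); first by apply: eq_bigr => -[].
by rewrite -(pair_bigA _ (fun a b => F (a, b))).
Qed.

Lemma conjh : ((sqrtC 2)^-1 : algC)^* = (sqrtC 2)^-1.
Proof. by apply: geC0_conj; rewrite invr_ge0 sqrtC_ge0 ler0n. Qed.

Lemma projPhi (p q : bool * bool) :
  proj Phi2 p q = if (p.1 == p.2) && (q.1 == q.2) then 2^-1 else 0.
Proof.
rewrite /proj /Phi2; case: (p.1 == p.2); case: (q.1 == q.2) => /=;
  rewrite ?rmorph0 ?mulr0 ?mul0r // conjh -expr2 exprVn sqrtCK //.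
Qed.

Lemma onb2E v : onb2 v -> forall a a',
  v a false * (v a' false)^* + v a true * (v a' true)^* = if a == a' then 1 else 0.
Proof. by move=> h a a'; rewrite -h big_bool addrC. Qed.

Lemma col_diag (R : comRingType) (a b c d a' b' c' d' : R) :
  a * a' + b * b' = 1 -> c * c' + d * d' = 1 -> a * c' + b * d' = 0 ->
  c * a' + d * b' = 0 -> a * a' + c * c' = 1.
Proof.
move=> e1 e2 f g.
have -> : a * a' + c * c' = 1 + (a * a' + b * b' - 1) * (1 - c * c')
   + b * b' * (c * c' + d * d' - 1) + (a * c' + b * d') * (c * a' + d * b')
   - (a * c' + b * d') * b' * d - (c * a' + d * b') * b * d' by ring.
by rewrite e1 e2 f g !subrr !(mul0r, mulr0, addr0, subr0).
Qed.

Arguments col_diag {R a b c d a' b' c' d'}.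

Lemma col_off (R : comRingType) (a b c d a' b' c' d' : R) :
  a * a' + b * b' = 1 -> c * c' + d * d' = 1 -> a * c' + b * d' = 0 ->
  c * a' + d * b' = 0 -> a * b' + c * d' = 0.
Proof.
move=> e1 e2 f g.
have -> : a * b' + c * d' = b' * c * (a * c' + b * d') + a * d' * (c * a' + d * b')
   - a * b' * (c * c' + d * d' - 1) - c * d' * (a * a' + b * b' - 1) by ring.
by rewrite e1 e2 f g !subrr !(mul0r, mulr0, addr0, subr0).
Qed.

Arguments col_off {R a b c d a' b' c' d'}.

Lemma onb_cols v : onb2 v -> forall k k',
  v false k * (v false k')^* + v true k * (v true k')^* = if k == k' then 1 else 0.
Proof.
move=> /onb2E h.
have e1 := h false false; have e2 := h true true;
have f := h false true; have g := h true false; rewrite /= in e1 e2 f g.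
have e1' := e1; have e2' := e2; have f' := f; have g' := g.
rewrite addrC in e1'; rewrite addrC in e2'; rewrite addrC in f'; rewrite addrC in g'.
case; case => /=.
- exact: (col_diag e1' e2' f' g').
- exact: (col_off e1' e2' f' g').
- exact: (col_off e1 e2 f g).
- exact: (col_diag e1 e2 f g).
Qed.

Definition Dg (x : Sys4) : bool := (x.1.1 == x.1.2) && (x.2.1 == x.2.2).

Lemma rho4E y x : rho4 y x = if Dg x && Dg y then 4^-1 else 0.
Proof.
rewrite /rho4 /Dg !projPhi.
case: (y.1.1 == y.1.2); case: (x.1.1 == x.1.2); case: (y.2.1 == y.2.2);
  case: (x.2.1 == x.2.2); rewrite /= ?mulr0 ?mul0r //.
rewrite -invfM; congr (_^-1); by rewrite -natrM.
Qed.

Lemma sumD (G : Sys4 -> algC) :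
  \sum_(x : Sys4 | Dg x) G x = \sum_(i : bool) \sum_(j : bool) G ((i, i), (j, j)).
Proof.
rewrite big_mkcond sumS4; under eq_bigr do rewrite sumBA.
rewrite sumBA /= !big_bool /=.
rewrite !(addr0, add0r); ring.
Qed.

Lemma trtensE (P Q : oper BA) : trprod (tens_B1A2_B2A1 P Q) rho4 =
  4^-1 * \sum_(i : bool) \sum_(j : bool) \sum_(i' : bool) \sum_(j' : bool)
     P (i, j) (i', j') * Q (j, i) (j', i').
Proof.
rewrite /trprod.
transitivity (\sum_(x : Sys4 | Dg x) \sum_(y : Sys4 | Dg y)
                4^-1 * tens_B1A2_B2A1 P Q x y).
  rewrite [RHS]big_mkcond; apply: eq_bigr => x _.
  case: (boolP (Dg x)) => hx.
    rewrite [RHS]big_mkcond; apply: eq_bigr => y _; rewrite rho4E hx /=.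
    by case: (Dg y); rewrite ?mulr0 // mulrC.
  by apply: big1 => y _; rewrite rho4E (negbTE hx) /= mulr0.
rewrite sumD mulr_sumr; apply: eq_bigr => i _; rewrite mulr_sumr.
apply: eq_bigr => j _; rewrite sumD mulr_sumr; apply: eq_bigr => i' _.
rewrite mulr_sumr; apply: eq_bigr => j' _ //.
Qed.

Lemma prob4E v w a b : prob4 v w a b =
  2^-1 * ((v a false * w b false + v a true * w b true) *
          ((v a false)^* * (w b false)^* + (v a true)^* * (w b true)^*)).
Proof.
rewrite /prob4 trtensE !big_bool.
rewrite /Pop /Qop /addop /proj /Vvec /Wvec /phi_ij /=.
rewrite !(mulr0, mul0r, addr0, add0r, mulr1, mul1r, rmorph0, rmorph1, rmorphD, rmorphM).
by field.
Qed.

Lemma probqE v w a b : prob_qubit v w a b =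
  2^-1 * ((v a false * w b false + v a true * w b true) *
          ((v a false)^* * (w b false)^* + (v a true)^* * (w b true)^*)).
Proof.
rewrite /prob_qubit /trprod.
under eq_bigr => x _ do under eq_bigr => y _ do rewrite projPhi.

rewrite !sumBA /= /proj /vec2.
rewrite !(mulr0, mul0r, addr0, add0r).

by field.
Qed.

Lemma pure_of (psi : vect BA) (p : bool) :
  \sum_(x : BA) psi x * (psi x)^* = 1 ->
  (forall x : BA, x.1 (+) x.2 != p -> psi x = 0) -> pure11 psi.
Proof.
move=> hn hp; split.
  by rewrite -hn; apply: eq_bigr => x _; rewrite normCK.
exists p => x hx; apply/eqP; apply: contraNT hx => h; apply/eqP; exact: hp.
Qed.

Lemma effect2 (P : oper BA) (psi0 psi1 : vect BA) :
  pure11 psi0 -> pure11 psi1 ->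
  (forall x y, P x y = proj psi0 x y + proj psi1 x y) -> valid_effect11 P.
Proof.
move=> h0 h1 hP; exists 2%N, (fun _ => 1), (fun i => if val i == 0%N then psi0 else psi1).
split; first by move=> i; exact: ler01.
split; first by move=> i; case: (val i == 0%N).
by move=> x y; rewrite big_ord_recr big_ord1 /= !mul1r hP.
Qed.

Lemma Vpure v a l : onb2 v -> pure11 (Vvec v a l).
Proof.
move=> /onb2E h; apply: (@pure_of _ l).
  rewrite sumBA /Vvec /phi_ij; case: l => /=;
  rewrite !(mulr0, mul0r, addr0, add0r, mulr1, mul1r, rmorph0, rmorph1);
  by move: (h a a); rewrite eqxx => <-; ring.
by move=> [[] []]; case: l; rewrite /Vvec /phi_ij /= ?(mulr0, mul0r, addr0, add0r) .
Qed.

Lemma Wpure w b l : onb2 w -> pure11 (Wvec w b l).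
Proof.
move=> /onb2E h; apply: (@pure_of _ l).
  rewrite sumBA /Wvec /phi_ij; case: l => /=;
  rewrite !(mulr0, mul0r, addr0, add0r, mulr1, mul1r, rmorph0, rmorph1);
  by move: (h b b); rewrite eqxx => <-; ring.
by move=> [[] []]; case: l; rewrite /Wvec /phi_ij /= ?(mulr0, mul0r, addr0, add0r) .
Qed.

Lemma Pmeas v : onb2 v -> valid_meas11 (Pop v).
Proof.
move=> hv; have c := onb_cols v hv; split.
  by move=> a; apply: (@effect2 _ _ _ (Vpure v a false hv) (Vpure v a true hv)).
move=> [[] []] [[] []];
rewrite /Pop /addop /proj /Vvec /phi_ij /idop /=;
rewrite ?(mulr0, mul0r, addr0, add0r, mulr1, mul1r, rmorph0, rmorph1).
all: try (by []).
all: try (by rewrite -[RHS](c false false); ring).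
all: try (by rewrite -[RHS](c true true); ring).
all: try (by rewrite -[RHS](c false true); ring).
all: try (by rewrite -[RHS](c true false); ring).
Qed.

Lemma Qmeas w : onb2 w -> valid_meas11 (Qop w).
Proof.
move=> hw; have c := onb_cols w hw; split.
  by move=> a; apply: (@effect2 _ _ _ (Wpure w a false hw) (Wpure w a true hw)).
move=> [[] []] [[] []];
rewrite /Qop /addop /proj /Wvec /phi_ij /idop /=;
rewrite ?(mulr0, mul0r, addr0, add0r, mulr1, mul1r, rmorph0, rmorph1).
all: try (by []).
all: try (by rewrite -[RHS](c false false); ring).
all: try (by rewrite -[RHS](c true true); ring).
all: try (by rewrite -[RHS](c false true); ring).
all: try (by rewrite -[RHS](c true false); ring).
Qed.

Definition tt2 : algC := sqrtC 2.
Definition rr : algC := tt2 / 2.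
Definition cc : algC := sqrtC ((2 + tt2) / 4).
Definition ss : algC := sqrtC ((2 - tt2) / 4).

Lemma tt_ge0 : 0 <= tt2. Proof. by rewrite sqrtC_ge0 ler0n. Qed.
Lemma tt_sq : tt2 * tt2 = 2. Proof. by rewrite -expr2 sqrtCK. Qed.
Lemma tt_gt1 : 1 < tt2.
Proof.
rewrite /tt2 -{1}(sqrtC1 algC) ltr_sqrtC ?qualifE /= ?ler01 ?ler0n //.
by rewrite ltr1n.
Qed.
Lemma tt_le2 : tt2 <= 2.
Proof.
have -> : (2 : algC) = sqrtC (2 ^+ 2) by rewrite sqrCK ?ler0n.
by rewrite /tt2 ler_sqrtC ?qualifE /= ?ler0n ?exprn_ge0 ?ler0n // expr2 -natrM ler_nat.
Qed.

Lemma conj_tt : tt2^* = tt2. Proof. exact: geC0_conj tt_ge0. Qed.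
Lemma conj_rr : rr^* = rr.
Proof. apply: geC0_conj; apply: divr_ge0; [exact: tt_ge0 | exact: ler0n]. Qed.
Lemma h1 : 0 <= (2 + tt2) / 4.
Proof. by apply: divr_ge0; [apply: addr_ge0; [exact: ler0n | exact: tt_ge0] | exact: ler0n]. Qed.
Lemma h2 : 0 <= (2 - tt2) / 4.
Proof. by apply: divr_ge0; [rewrite subr_ge0; exact: tt_le2 | exact: ler0n]. Qed.
Lemma conj_cc : cc^* = cc. Proof. by apply: geC0_conj; rewrite sqrtC_ge0 h1. Qed.
Lemma conj_ss : ss^* = ss. Proof. by apply: geC0_conj; rewrite sqrtC_ge0 h2. Qed.

Lemma rr_sq : rr * rr = 2^-1.
Proof.
rewrite /rr; transitivity ((tt2 * tt2) / 4); first by field.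
by rewrite tt_sq; field.
Qed.
Lemma cc_sq : cc * cc = (2 + tt2) / 4. Proof. by rewrite -expr2 sqrtCK. Qed.
Lemma ss_sq : ss * ss = (2 - tt2) / 4. Proof. by rewrite -expr2 sqrtCK. Qed.
Lemma cs : cc * ss = tt2 / 4.
Proof.
have := h1; have := h2.
move=> h2 h1; rewrite /cc /ss -sqrtCM ?qualifE //.
have -> : (2 + tt2) / 4 * ((2 - tt2) / 4) = (tt2 / 4) ^+ 2.
  transitivity ((4 - tt2 * tt2) / 16); first by field.
  transitivity ((tt2 * tt2) / 16); last by field.
  by rewrite tt_sq; field.
by rewrite sqrCK //; apply: divr_ge0; [exact: tt_ge0 | exact: ler0n].
Qed.
Lemma sc : ss * cc = tt2 / 4. Proof. by rewrite mulrC cs. Qed.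

Definition V0 (a k : bool) : algC := if a == k then 1 else 0.
Definition V1 (a k : bool) : algC := if a && k then - rr else rr.
Definition W0 (a k : bool) : algC :=
  if a then (if k then cc else - ss) else (if k then ss else cc).
Definition W1 (a k : bool) : algC :=
  if a then (if k then cc else ss) else (if k then - ss else cc).

Lemma conjN' (x : algC) : (- x)^* = - x^*. Proof. exact: rmorphN. Qed.

Definition realv (v : bool -> bool -> algC) := forall a k, (v a k)^* = v a k.

Lemma realV0 : realv V0. Proof. by move=> [] []; rewrite /V0 /= ?rmorph0 ?rmorph1. Qed.
Lemma realV1 : realv V1. Proof. by move=> [] []; rewrite /V1 /= ?conjN' conj_rr. Qed.
Lemma realW0 : realv W0. Proof. by move=> [] []; rewrite /W0 /= ?conjN' ?conj_cc ?conj_ss. Qed.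
Lemma realW1 : realv W1. Proof. by move=> [] []; rewrite /W1 /= ?conjN' ?conj_cc ?conj_ss. Qed.

Lemma probreal v w (a b : bool) : realv v -> realv w ->
  prob4 v w a b = 2^-1 * ((v a false * w b false + v a true * w b true) *
                          (v a false * w b false + v a true * w b true)).
Proof. by move=> hv hw; rewrite prob4E !hv !hw. Qed.

Lemma onb_real v : realv v ->
  (forall a a', v a true * v a' true + v a false * v a' false = if a == a' then 1 else 0) ->
  onb2 v.
Proof. by move=> hv h a a'; rewrite big_bool /= !hv; apply: h. Qed.

Lemma onbV0 : onb2 V0.
Proof. apply: onb_real realV0 _ => - [] [] /=; rewrite /V0 /=; ring. Qed.
Lemma onbV1 : onb2 V1.
Proof.
apply: onb_real realV1 _ => - [] [] /=; rewrite /V1 /= ?mulrN ?mulNr ?opprK rr_sq; by field.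
Qed.
Lemma onbW0 : onb2 W0.
Proof.
apply: onb_real realW0 _ => - [] [] /=; rewrite /W0 /= ?mulrN ?mulNr ?opprK
  ?cc_sq ?ss_sq ?cs ?sc; by field.
Qed.
Lemma onbW1 : onb2 W1.
Proof.
apply: onb_real realW1 _ => - [] [] /=; rewrite /W1 /= ?mulrN ?mulNr ?opprK
  ?cc_sq ?ss_sq ?cs ?sc; by field.
Qed.

Lemma chsh_val :
  CHSH (correlator (prob4 V0 W0)) (correlator (prob4 V0 W1))
       (correlator (prob4 V1 W0)) (correlator (prob4 V1 W1)) = 2 * tt2.
Proof.
rewrite /CHSH /correlator !big_bool /=.
rewrite !(probreal _ _ _ _ realV0 realW0) !(probreal _ _ _ _ realV0 realW1)
  !(probreal _ _ _ _ realV1 realW0) !(probreal _ _ _ _ realV1 realW1).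
rewrite /V0 /V1 /W0 /W1 /=.
transitivity (2 * (cc * cc - ss * ss) + 8 * (rr * rr) * (cc * ss)); first by field.
rewrite cc_sq ss_sq rr_sq cs; by field.
Qed.

Theorem mainTheorem3 :
  (forall v w : bool -> bool -> algC, onb2 v -> onb2 w ->
     [/\ valid_meas11 (Pop v),
         valid_meas11 (Qop w),
         (forall a b : bool,
            prob4 v w a b = 2^-1 * `|v a false * w b false + v a true * w b true| ^+ 2) &
         (forall a b : bool, prob4 v w a b = prob_qubit v w a b)]) /\
  (exists v0 v1 w0 w1 : bool -> bool -> algC,
     [/\ onb2 v0, onb2 v1, onb2 w0, onb2 w1 &
         CHSH (correlator (prob4 v0 w0)) (correlator (prob4 v0 w1))
              (correlator (prob4 v1 w0)) (correlator (prob4 v1 w1))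
         = 2 * sqrtC 2]) /\
  2 < 2 * sqrtC 2 :> algC.
Proof.
split.
  move=> v w hv hw; split.
  - exact: Pmeas.
  - exact: Qmeas.
  - move=> a b; rewrite prob4E normCK; congr (_ * (_ * _)).
    by rewrite rmorphD !rmorphM.
  - by move=> a b; rewrite prob4E probqE.
split.
  exists V0, V1, W0, W1; split.
  - exact: onbV0.
  - exact: onbV1.
  - exact: onbW0.
  - exact: onbW1.
  - exact: chsh_val.
have := tt_gt1; rewrite /tt2 => h.
by rewrite -{1}(mulr1 2) ltr_pM2l // ltr0n.
Qed.
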